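(* Let $K\subset\mathbb{C}$ be a totally imaginary quartic number field with ring of integers $\mathcal{O}_K$, such that $K_0=K\cap\mathbb{R}$ is a real quadratic field. Let $\sigma:K\to\mathbb{C}$ be a field embedding whose restriction to $K_0$ is the non-trivial automorphism of $K_0$. Let $\mathcal{B}\subseteq\mathbb{C}$ be a bounded set containing $0$ as an interior point, and let $$\mathcal{S}_{\mathcal B}=\{z\in\mathcal{O}_K : \sigma(z)\in\mathcal{B}\}.$$ If $z_1,z_2\in\mathcal{S}_{\mathcal B}$ with $z_1\neq z_2$, then $$|z_1-z_2|\ge\frac{1}{2\operatorname{diam}(\mathcal{B})}.$$
   Context: Elements of $K$ are regarded as complex numbers via the inclusion $K\subset\mathbb{C}$; $\operatorname{diam}(\mathcal B)=\sup\{|a-b|:a,b\in\mathcal B\}$. *)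

(* Defs.v *)
From HB Require Import structures.
From mathcomp Require Import all_boot all_order all_algebra.
From mathcomp Require Import complex.
From mathcomp Require Import all_classical all_reals.
Set Implicit Arguments. Unset Strict Implicit. Unset Printing Implicit Defensive.
Import Order.TTheory GRing.Theory Num.Theory.
Local Open Scope ring_scope.
Local Open Scope classical_set_scope.

Definition cabs (R : realType) (z : R[i]) : R := complex.Re `|z|.

Definition diam (R : realType) (B : set R[i]) : R :=
  sup [set cabs (a - b) | a in B & b in B].

Definition is_subfield (C : fieldType) (K : set C) : Prop :=
  K 1 /\ (forall x y, K x -> K y -> K (x - y)) /\
  (forall x y, K x -> K y -> K (x * y)) /\
  (forall x, K x -> x != 0 -> K x^-1).

Definition Qdim (C : fieldType) (K : set C) (n : nat) : Prop :=
  exists b : 'I_n -> C,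
    (forall x, K x <-> exists q : 'I_n -> rat, x = \sum_(i < n) ratr (q i) * b i) /\
    (forall q : 'I_n -> rat, \sum_(i < n) ratr (q i) * b i = 0 -> forall i, q i = 0).

Definition number_field (C : fieldType) (K : set C) (n : nat) : Prop :=
  is_subfield K /\ Qdim K n.

(* field embedding of K into C (a ring morphism K -> C; values outside K irrelevant) *)
Definition field_embedding (C : fieldType) (K : set C) (s : C -> C) : Prop :=
  s 1 = 1 /\
  (forall x y, K x -> K y -> s (x + y) = s x + s y) /\
  (forall x y, K x -> K y -> s (x * y) = s x * s y).

Definition totally_imaginary (R : realType) (K : set R[i]) : Prop :=
  forall s : R[i] -> R[i], field_embedding K s -> exists x, K x /\ s x \isn't Num.real.

Definition real_part_field (R : realType) (K : set R[i]) : set R[i] :=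
  [set x | K x /\ x \is Num.real].

Definition ring_of_integers (C : fieldType) (K : set C) : set C :=
  [set z | K z /\ integralOver (intr : int -> C) z].

Definition restricts_to_nontrivial_aut (C : fieldType) (F : set C) (s : C -> C) : Prop :=
  (forall x, F x -> F (s x)) /\ (forall y, F y -> exists x, F x /\ s x = y) /\
  (exists x, F x /\ s x != x).

(* Main.v *)
Require Import Defs.
From HB Require Import structures.
From mathcomp Require Import all_boot all_order all_algebra.
From mathcomp Require Import complex.
From mathcomp Require Import all_classical all_reals.
From mathcomp Require algC algnum.
From mathcomp Require Import ring lra.
Import Order.TTheory GRing.Theory Num.Theory.
Local Open Scope ring_scope.

Section Basics.
Variables (C : numFieldType) (K : set C).
Hypothesis sK : is_subfield K.

Lemma sK1 : K 1. Proof. by move: sK => [h1 [h2 [h3 h4]]]. Qed.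
Lemma sKB {x y} : K x -> K y -> K (x - y). Proof. by move: sK => [h1 [h2 [h3 h4]]]; apply: h2. Qed.
Lemma sKM {x y} : K x -> K y -> K (x * y). Proof. by move: sK => [h1 [h2 [h3 h4]]]; apply: h3. Qed.
Lemma sKV {x} : K x -> x != 0 -> K x^-1. Proof. by move: sK => [h1 [h2 [h3 h4]]]; apply: h4. Qed.
Lemma sK0 : K 0. Proof. by rewrite -(subrr 1); apply: sKB; apply: sK1. Qed.
Lemma sKN {x} : K x -> K (- x). Proof. by move=> Kx; rewrite -sub0r; apply: sKB => //; apply: sK0. Qed.
Lemma sKD {x y} : K x -> K y -> K (x + y).
Proof. by move=> Kx Ky; rewrite -[y]opprK; apply: sKB => //; apply: sKN. Qed.
Lemma sKn n : K n%:R.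
Proof. elim: n => [|n IH]; first exact: sK0. by rewrite -addn1 natrD; apply: sKD => //; apply: sK1. Qed.
Lemma sKz (z : int) : K z%:~R.
Proof. case: z => n; first exact: sKn. by rewrite NegzE mulrNz; apply: sKN; apply: sKn. Qed.
Lemma sKQ (q : rat) : K (ratr q).
Proof.
rewrite /ratr; apply: sKM; first exact: sKz.
by apply: sKV; [exact: sKz | rewrite intr_eq0 denq_neq0].
Qed.

Variable s : C -> C.
Hypothesis es : field_embedding K s.
Lemma es1 : s 1 = 1. Proof. by move: es => [h1 [h2 h3]]. Qed.
Lemma esD {x y} : K x -> K y -> s (x + y) = s x + s y. Proof. by move: es => [h1 [h2 h3]]; apply: h2. Qed.
Lemma esM {x y} : K x -> K y -> s (x * y) = s x * s y. Proof. by move: es => [h1 [h2 h3]]; apply: h3. Qed.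
Lemma es0 : s 0 = 0.
Proof. have := esD sK0 sK0; rewrite addr0 => /eqP; by rewrite -subr_eq subrr eq_sym => /eqP. Qed.
Lemma esN {x} : K x -> s (- x) = - s x.
Proof. move=> Kx; apply/eqP; rewrite -subr_eq0 opprK -esD ?addNr ?es0 //; exact: sKN. Qed.
Lemma esB {x y} : K x -> K y -> s (x - y) = s x - s y.
Proof. by move=> Kx Ky; rewrite esD ?esN //; apply: sKN. Qed.
Lemma esn n : s n%:R = n%:R.
Proof. elim: n => [|n IH]; first exact: es0. by rewrite -addn1 natrD esD ?IH ?es1 //; [apply: sKn|apply: sK1]. Qed.
Lemma esz (z : int) : s z%:~R = z%:~R.
Proof. case: z => n; first exact: esn. by rewrite NegzE mulrNz esN ?esn //; apply: sKn. Qed.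
Lemma esV {x} : K x -> x != 0 -> s x^-1 = (s x)^-1.
Proof.
move=> Kx x0; have := esM Kx (sKV Kx x0); rewrite mulfV // es1 => h.
have sx0 : s x != 0 by apply/eqP => e; move: h; rewrite e mul0r => /eqP; rewrite oner_eq0.
by apply: (mulfI sx0); rewrite -h mulfV.
Qed.
Lemma esQ q : s (ratr q) = ratr q.
Proof.
rewrite /ratr esM ?esV ?esz //; try exact: sKz; rewrite ?intr_eq0 ?denq_neq0 //.
by apply: sKV; [exact: sKz | rewrite intr_eq0 denq_neq0].
Qed.
Lemma es_neq0 {x} : K x -> x != 0 -> s x != 0.
Proof.
move=> Kx x0; apply/eqP => e; have := esM Kx (sKV Kx x0).
by rewrite mulfV // es1 e mul0r => /eqP; rewrite oner_eq0.
Qed.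

End Basics.

Lemma Qdep (C : numFieldType) (K : set C) n m (f : 'I_m -> C) :
  Qdim K n -> (n < m)%N -> (forall i, K (f i)) ->
  exists u : 'I_m -> rat, (exists i, u i != 0) /\ \sum_i ratr (u i) * f i = 0.
Proof.
move=> [b [hspan hind]] ltnm Kf.
have hc : forall i, exists q : 'I_n -> rat, f i = \sum_j ratr (q j) * b j.
  by move=> i; apply/hspan.
have [c hc'] := boolp.choice hc.
pose A : 'M[rat]_(m, n) := \matrix_(i, j) c i j.
have nfree : ~~ row_free A.
  rewrite /row_free; apply/negP => /eqP hr.
  by have := rank_leq_col A; rewrite hr leqNgt ltnm.
have kA : kermx A != 0 by rewrite kermx_eq0.
have [i0 hi0] : exists i0, row i0 (kermx A) != 0.
  apply/boolp.not_existsP => hall; move/negP: kA; apply; apply/eqP/row_matrixP => i.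
  by rewrite row0; move: (hall i) => /negP; rewrite negbK => /eqP.
set u := row i0 (kermx A) in hi0.
have uA : u *m A = 0 by rewrite /u -row_mul mulmx_ker row0.
clearbody u.
exists (fun i => u 0 i); split.
  apply/boolp.not_existsP => hall; move/negP: hi0; apply; apply/eqP/rowP => j.
  by rewrite [RHS]mxE; move: (hall j) => /negP; rewrite negbK => /eqP.
transitivity (\sum_j ratr ((u *m A) 0 j) * b j).
  under eq_bigr do rewrite hc' mulr_sumr.
  rewrite exchange_big /=; apply: eq_bigr => j _.
  rewrite !mxE rmorph_sum mulr_suml; apply: eq_bigr => i _.
  by rewrite !mxE rmorphM mulrA.
rewrite uA; apply: big1 => j _; by rewrite mxE rmorph0 mul0r.
Qed.

Lemma widen_lift n (j : 'I_n) : widen_ord (leqnSn n) j = lift ord_max j.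
Proof. by apply: val_inj; rewrite /= /bump leqNgt ltn_ord. Qed.

Lemma Qspan (C : numFieldType) (K : set C) n (g : 'I_n -> C) :
  Qdim K n -> (forall i, K (g i)) ->
  (forall q : 'I_n -> rat, \sum_i ratr (q i) * g i = 0 -> forall i, q i = 0) ->
  forall y, K y -> exists q : 'I_n -> rat, y = \sum_i ratr (q i) * g i.
Proof.
move=> hQ Kg hind y Ky.
pose f : 'I_n.+1 -> C := fun i => if unlift ord_max i is Some j then g j else y.
have Kf : forall i, K (f i).
  by move=> i; rewrite /f; case: (unlift ord_max i).
have [u [[i1 hi1] hu]] := @Qdep _ _ _ _ f hQ (ltnSn n) Kf.
rewrite big_ord_recr /= in hu.
have fw : forall j, f (widen_ord (leqnSn n) j) = g j.
  by move=> j; rewrite /f widen_lift liftK.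
have fm : f ord_max = y by rewrite /f unlift_none.
rewrite (eq_bigr (fun j => ratr (u (widen_ord (leqnSn n) j)) * g j)) in hu; last first.
  by move=> j _; rewrite fw.
rewrite fm in hu.
have [a0|an0] := eqVneq (u ord_max) 0.
  move: hu; rewrite a0 rmorph0 mul0r addr0 => /hind hu0.
  move: hi1; case: (unliftP ord_max i1) => [j ->|->]; last by rewrite a0 eqxx.
  by rewrite -widen_lift hu0 eqxx.
exists (fun j => - u (widen_ord (leqnSn n) j) / u ord_max).
have ra0 : ratr (u ord_max) != 0 :> C by rewrite fmorph_eq0.
apply: (mulfI ra0); rewrite mulr_sumr.
move/eqP: hu; rewrite addrC addr_eq0 => /eqP ->.
rewrite -sumrN; apply: eq_bigr => j _.
by rewrite rmorphM rmorphN fmorphV mulrA mulrCA mulfV // mulr1 mulNr.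
Qed.

Module DPart.
Import algC algnum.

Lemma root_int_rat (C : numFieldType) (p : {poly int}) (q : rat) :
  root (map_poly (intr : int -> C) p) (ratr q) = root (map_poly (intr : int -> rat) p) q.
Proof.
rewrite -(fmorph_root (ratr : {rmorphism rat -> C})) -map_poly_comp.
by congr root; apply: eq_map_poly => z /=; rewrite ratr_int.
Qed.

Lemma rat_integral_int (C : numFieldType) (q : rat) :
  integralOver (intr : int -> C) (ratr q) -> q \is a Num.int.
Proof.
case=> p monp; rewrite root_int_rat -(root_int_rat algC) => hr.
have hA : (ratr q : algC) \in Aint.
  apply: root_monic_Aint hr _ _.
  - exact: monic_map.
  - by apply/polyOverP => i; rewrite coef_map intr_int.
have /intrP [m hm] := Cint_rat_Aint (Crat_rat q) hA.
have -> : q = m%:~R by apply: (fmorph_inj (ratr : {rmorphism rat -> algC})); rewrite /= ratr_int -hm.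
exact: intr_int.
Qed.

End DPart.
Import DPart.

Section Conj.
Variable R : realType.
Local Notation C := R[i].

Lemma realJ (x : C) : x \is Num.real -> x^*%C = x.
Proof. by case: x => a b; rewrite complex_real => /eqP ->; rewrite /conjc oppr0. Qed.

Lemma nrealJ (x : C) : x \isn't Num.real -> x^*%C != x.
Proof.
case: x => a b; rewrite complex_real /conjc => hb; apply/negP => /eqP [].
  move=> hbb; move: hb; have -> : b = 0 by lra.
 by rewrite eqxx.
Qed.

Lemma ratr_real (q : rat) : (ratr q : C) \is Num.real.
Proof. by rewrite realE ler0q lerq0 le_total. Qed.

Lemma conj_root (w p q : C) : w \isn't Num.real -> p \is Num.real -> q \is Num.real ->
  w ^+ 2 = p + q * w -> w^*%C = q - w.
Proof.
move=> wn pr qr e.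
have e' : (w^*%C) ^+ 2 = p + q * w^*%C.
  by rewrite -(@realJ p pr) -(@realJ q qr) -rmorphXn e rmorphD rmorphM.
have hne : w - w^*%C != 0 by rewrite subr_eq0 eq_sym nrealJ.
have : (w - w^*%C) * (w + w^*%C - q) = 0.
  have -> : (w - w^*%C) * (w + w^*%C - q) = (w ^+ 2 - q * w) - ((w^*%C) ^+ 2 - q * w^*%C) by ring.
  by rewrite e e'; ring.
move/eqP; rewrite mulf_eq0 (negPf hne) /= subr_eq0 => /eqP h.
by rewrite -h; ring.
Qed.

End Conj.

Section K0part.
Variables (R : realType) (K : set R[i]) (s : R[i] -> R[i]).
Local Notation C := R[i].
Hypotheses (sK : is_subfield K) (es : field_embedding K s)
  (nt : restricts_to_nontrivial_aut (real_part_field K) s)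
  (dK0 : Qdim (real_part_field K) 2).
Local Notation K0 := (real_part_field K).
Let eQ := @esQ _ _ sK _ es.
Let eD := @esD _ _ _ es.
Let eM := @esM _ _ _ es.
Let kQ := @sKQ _ _ sK.
Let kM := @sKM _ _ sK.
Let kD := @sKD _ _ sK.

Lemma K0K x : K0 x -> K x. Proof. by case. Qed.
Lemma K0r x : K0 x -> x \is Num.real. Proof. by case. Qed.
Lemma K0s x : K0 x -> K0 (s x). Proof. by case: nt => h _; apply: h. Qed.
Lemma K0Q q : K0 (ratr q). Proof. by split; [apply: kQ | apply: ratr_real]. Qed.
Lemma K0D x y : K0 x -> K0 y -> K0 (x + y).
Proof. by move=> [? ?] [? ?]; split; [apply: kD | apply: rpredD]. Qed.
Lemma K0M x y : K0 x -> K0 y -> K0 (x * y).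
Proof. by move=> [? ?] [? ?]; split; [apply: kM | apply: rpredM]. Qed.

Lemma sum2 (F : 'I_2 -> C) : \sum_i F i = F ord0 + F (lift ord0 ord0).
Proof. by rewrite !big_ord_recl big_ord0 addr0. Qed.

Lemma K0_norm_rat : exists x0, K0 x0 /\
   (forall a b : rat, ratr a + ratr b * x0 = 0 -> a = 0 /\ b = 0) /\
   (forall y, K0 y -> exists a b : rat, y = ratr a + ratr b * x0) /\
   (forall y, K0 y -> exists r : rat, y * s y = ratr r).
Proof.
case: nt => _ [_ [x0 [Kx0 sx0]]].
have ind : forall a b : rat, ratr a + ratr b * x0 = 0 -> a = 0 /\ b = 0.
  move=> a b e.
  have [b0|bn0] := eqVneq b 0.
    move: e; rewrite b0 rmorph0 mul0r addr0 => /eqP; rewrite fmorph_eq0 => /eqP; done.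
  have hx : x0 = ratr (- a / b).
    apply: (mulfI (x := ratr b)); first by rewrite fmorph_eq0.
    rewrite rmorphM rmorphN fmorphV mulrCA mulfV ?fmorph_eq0 // mulr1.
    by apply/eqP; rewrite -addr_eq0 addrC e.
  by move: sx0; rewrite hx eQ // eqxx.
pose g : 'I_2 -> C := fun i => if val i == 0%N then 1 else x0.
have Kg : forall i, K0 (g i) by move=> i; rewrite /g; case: ifP => _ //; by have := K0Q 1; rewrite rmorph1.
have indg : forall q : 'I_2 -> rat, \sum_i ratr (q i) * g i = 0 -> forall i, q i = 0.
  move=> q; rewrite sum2 /g /= mulr1 => /ind [h0 h1] i.
  case: i => [[|[|k]] hk]; last by [].
    by rewrite -h0; congr q; apply: val_inj.
  by rewrite -h1; congr q; apply: val_inj.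
have span : forall y, K0 y -> exists a b : rat, y = ratr a + ratr b * x0.
  move=> y /(@Qspan _ _ _ _ dK0 Kg indg) [q ->]; exists (q ord0), (q (lift ord0 ord0)).
  by rewrite sum2 /g /= mulr1.
exists x0; split; first exact: Kx0. split; first exact: ind. split; first exact: span.
have [u [v huv]] := span _ (K0M _ _ Kx0 Kx0).
have Kx := K0K _ Kx0.
have huv' : s x0 * s x0 = ratr u + ratr v * s x0.
  rewrite -eM // huv eD; last 2 first.
  - exact: kQ.
  - exact: kM _ _ (kQ _) Kx.
  by rewrite eQ (eM (ratr v) x0) ?eQ //; exact: kQ.
have hsum : x0 + s x0 = ratr v.
  have hne : x0 - s x0 != 0 by rewrite subr_eq0 eq_sym.
  apply/eqP; rewrite -subr_eq0; apply/eqP; apply: (mulfI hne); rewrite mulr0.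
  have -> : (x0 - s x0) * (x0 + s x0 - ratr v) =
     (x0 * x0 - ratr v * x0) - (s x0 * s x0 - ratr v * s x0) by ring.
  by rewrite huv huv'; ring.
have hprod : x0 * s x0 = - ratr u.
  have -> : s x0 = ratr v - x0 by rewrite -hsum; ring.
  have -> : x0 * (ratr v - x0) = ratr v * x0 - x0 * x0 by ring.
  by rewrite huv; ring.
move=> y /span [a [b ->]].
exists (a * a + a * b * v - b * b * u).
rewrite eD; [|exact: kQ|exact: kM (kQ _) Kx].
rewrite eQ (eM (ratr b) x0 (kQ b) Kx) eQ.
have hu : ratr u = - (x0 * s x0) by rewrite hprod opprK.
rewrite !rmorphD !rmorphN !rmorphM /= -hsum hu; ring.
Qed.

End K0part.

Section Kpart.
Variables (R : realType) (K : set R[i]) (s : R[i] -> R[i]).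
Local Notation C := R[i].
Hypotheses (sK : is_subfield K) (es : field_embedding K s)
  (nt : restricts_to_nontrivial_aut (real_part_field K) s)
  (dK0 : Qdim (real_part_field K) 2) (dK : Qdim K 4) (tiK : totally_imaginary K).
Local Notation K0 := (real_part_field K).
Let eQ := @esQ _ _ sK _ es.
Let eD := @esD _ _ _ es.
Let eM := @esM _ _ _ es.
Let kQ := @sKQ _ _ sK.
Let kM := @sKM _ _ sK.
Let kD := @sKD _ _ sK.
Let k0K := @K0K R K.
Let k0r := @K0r R K.
Let k0s := @K0s R K s nt.
Let k0Q := @K0Q R K sK.
Let k0D := @K0D R K sK.
Let k0M := @K0M R K sK.

Lemma sum4 (F : 'I_4 -> C) : \sum_i F i =
  F ord0 + F (lift ord0 ord0) + F (lift ord0 (lift ord0 ord0))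
  + F (lift ord0 (lift ord0 (lift ord0 ord0))).
Proof. by rewrite !big_ord_recl big_ord0 addr0 !addrA. Qed.

Lemma K_struct : exists x, K x /\ x \isn't Num.real /\
  (forall y, K y -> exists A B, K0 A /\ K0 B /\ y = A + B * x).
Proof.
have [x0 [Kx0 [ind [span _]]]] := @K0_norm_rat R K s sK es nt dK0.
have [x [Kx xn]] : exists x, K x /\ x \isn't Num.real.
  by apply: tiK; split => //.
pose g : 'I_4 -> C := fun i => match val i with 0 => 1 | 1 => x0 | 2 => x | _ => x0 * x end.
have Kx0' := k0K _ Kx0.
have Kg : forall i, K (g i).
  move=> [[|[|[|k]]] hk]; rewrite /g /=; try done.
  - exact: sK1.
  - exact: kM.
have sumg : forall q : 'I_4 -> rat, \sum_i ratr (q i) * g i =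
   (ratr (q ord0) + ratr (q (lift ord0 ord0)) * x0) +
   (ratr (q (lift ord0 (lift ord0 ord0))) + ratr (q (lift ord0 (lift ord0 (lift ord0 ord0)))) * x0) * x.
  by move=> q; rewrite sum4 /g /=; ring.
have indg : forall q : 'I_4 -> rat, \sum_i ratr (q i) * g i = 0 -> forall i, q i = 0.
  move=> q; rewrite sumg; set A := _ + _ * x0; set B := _ + _ * x0 => e.
  have Ar : A \is Num.real by apply: rpredD; [exact: ratr_real | apply: rpredM; [exact: ratr_real | exact: k0r _ Kx0]].
  have Br : B \is Num.real by apply: rpredD; [exact: ratr_real | apply: rpredM; [exact: ratr_real | exact: k0r _ Kx0]].
  have B0 : B = 0.
    have [//|Bn] := eqVneq B 0; exfalso; move/negP: xn; apply.
    have -> : x = - A / B.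
      apply: (mulfI Bn); rewrite mulrCA mulfV // mulr1.
      by apply/eqP; rewrite -addr_eq0 addrC e.
    by apply: realM; rewrite ?realN ?realV.
  move: e; rewrite B0 mul0r addr0 => /ind [h0 h1].
  move: B0 => /ind [h2 h3].
  move=> [[|[|[|[|k]]]] hk] //.
  - by rewrite -h0; congr q; apply: val_inj.
  - by rewrite -h1; congr q; apply: val_inj.
  - by rewrite -h2; congr q; apply: val_inj.
  - by rewrite -h3; congr q; apply: val_inj.
exists x; split => //; split => // y /(@Qspan _ _ _ _ dK Kg indg) [q ->].
rewrite sumg; eexists; eexists; split; last split; last reflexivity.
  by apply: k0D; [apply: k0Q | apply: k0M => //; apply: k0Q].
by apply: k0D; [apply: k0Q | apply: k0M => //; apply: k0Q].
Qed.

Let kB := @sKB _ _ sK.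
Let eB := @esB _ _ sK _ es.

Lemma K_conj : forall y, K y -> K (y^*)%C /\ s (y^*)%C = ((s y)^*)%C.
Proof.
have [x [Kx [xn spanx]]] := K_struct.
have [a [c [Ka [Kc hx2]]]] := spanx (x * x) (kM _ _ Kx Kx).
have hxc : (x^*)%C = c - x.
  by apply: conj_root xn (k0r _ Ka) (k0r _ Kc) _; rewrite expr2 hx2.
have sxn : s x \isn't Num.real.
  apply/negP => sxr.
  have [y [Ky syn]] := tiK _ es.
  move/negP: syn; apply.
  have [A [B [KA [KB ->]]]] := spanx y Ky.
  rewrite eD ?eM //; last by apply: kM => //; apply: k0K.
  - by apply: realD; [exact: k0r _ (k0s _ KA) | apply: realM => //; exact: k0r _ (k0s _ KB)].
  - by apply: k0K.
  - by apply: k0K.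
have hsx2 : s x ^+ 2 = s a + s c * s x.
  by rewrite expr2 -eM // hx2 eD ?eM //; [apply: k0K | apply: k0K | apply: kM => //; apply: k0K].
have hsxc : ((s x)^*)%C = s c - s x.
  by apply: conj_root sxn (k0r _ (k0s _ Ka)) (k0r _ (k0s _ Kc)) hsx2.
move=> y Ky; have [A [B [KA [KB ->]]]] := spanx y Ky.
have KA' := k0K _ KA; have KB' := k0K _ KB; have Kc' := k0K _ Kc.
have hyc : ((A + B * x)^*)%C = A + B * (c - x).
  by rewrite rmorphD rmorphM /= hxc (@realJ _ _ (k0r _ KA)) (@realJ _ _ (k0r _ KB)).
rewrite hyc; split.
  by apply: kD => //; apply: kM => //; apply: kB.
rewrite eD //; last by apply: kM => //; apply: kB.
rewrite eM //; last by apply: kB.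
rewrite eB // eD //; last by apply: kM.
rewrite eM // rmorphD rmorphM /= hsxc.
by rewrite (@realJ _ _ (k0r _ (k0s _ KA))) (@realJ _ _ (k0r _ (k0s _ KB))).
Qed.

End Kpart.

Section Integral.
Variables (R : realType) (K : set R[i]) (s : R[i] -> R[i]).
Hypotheses (sK : is_subfield K) (es : field_embedding K s).
Let e0 := @es0 _ _ sK _ es.
Let ez := @esz _ _ sK _ es.
Let eD := @esD _ _ _ es.
Let eM := @esM _ _ _ es.
Let k0 := @sK0 _ _ sK.
Let kz := @sKz _ _ sK.
Let kM := @sKM _ _ sK.
Let kD := @sKD _ _ sK.

Lemma s_horner z (p : {poly int}) : K z ->
  K (map_poly (intr : int -> R[i]) p).[z] /\
  s (map_poly (intr : int -> R[i]) p).[z] = (map_poly (intr : int -> R[i]) p).[s z].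
Proof.
move=> Kz; elim/poly_ind: p => [|p c [IH1 IH2]].
  by rewrite rmorph0 !horner0 e0; split => //; apply: k0.
rewrite rmorphD rmorphM /= map_polyX map_polyC !hornerE.
have Kp := kM _ _ IH1 Kz.
split; first by apply: kD => //; apply: kz.
by rewrite eD ?eM ?ez ?IH2 //; apply: kz.
Qed.

Lemma s_integral z : K z -> integralOver (intr : int -> R[i]) z ->
  integralOver (intr : int -> R[i]) (s z).
Proof.
move=> Kz [p monp /eqP hr]; exists p => //; apply/eqP.
by have [_ <-] := @s_horner z p Kz; rewrite hr e0.
Qed.

End Integral.

Lemma conj_integral (R : realType) (z : R[i]) : integralOver (intr : int -> R[i]) z ->
  integralOver (intr : int -> R[i]) (z^*)%C.
Proof.
move=> [p monp hr]; exists p => //.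
have -> : map_poly (intr : int -> R[i]) p = map_poly (conjc : R[i] -> R[i]) (map_poly intr p).
  rewrite -map_poly_comp; apply: eq_map_poly => c /=; by rewrite rmorph_int.
by rewrite fmorph_root.
Qed.

Section Cabs.
Variable R : realType.
Lemma cabsE (w : R[i]) : (cabs w)%:C%C = `|w|.
Proof. by rewrite /cabs RRe_real // normr_real. Qed.
Lemma cabs_ge0 (w : R[i]) : 0 <= cabs w.
Proof. by rewrite -ler0c cabsE. Qed.
Lemma normsq (w : R[i]) : w * (w^*)%C = `|w| ^+ 2.
Proof. by rewrite normcE sqr_sqrtc. Qed.
Lemma cabsB (a b : R[i]) : cabs (a - b) <= cabs a + cabs b.
Proof. by rewrite -lecR rmorphD /= !cabsE ler_normB. Qed.
End Cabs.

Local Open Scope classical_set_scope.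

Theorem mainTheorem2 (R : realType) (K : set R[i]) (s : R[i] -> R[i]) (B : set R[i]) :
  number_field K 4 ->
  totally_imaginary K ->
  Qdim (real_part_field K) 2 ->
  field_embedding K s ->
  restricts_to_nontrivial_aut (real_part_field K) s ->
  (exists M : R, forall z, B z -> cabs z <= M) ->
  (exists r : R, 0 < r /\ forall z, cabs z < r -> B z) ->
  forall z1 z2,
    ring_of_integers K z1 -> B (s z1) ->
    ring_of_integers K z2 -> B (s z2) ->
    z1 != z2 ->
    1 / (2 * diam B) <= cabs (z1 - z2).
Proof.
move=> [sK dK] tiK dK0 es nt [M hM] _ z1 z2 [Kz1 Iz1] Bz1 [Kz2 Iz2] Bz2 z12.
set z := z1 - z2.
have Kz : K z := @sKB _ _ sK _ _ Kz1 Kz2.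
have Iz : integralOver (intr : int -> R[i]) z := integral_sub Iz1 Iz2.
have z0 : z != 0 by rewrite subr_eq0.
have [Kzc szc] := @K_conj R K s sK es nt dK0 dK tiK z Kz.
set n := z * (z^*)%C.
have Kn : K n := @sKM _ _ sK _ _ Kz Kzc.
have K0n : real_part_field K n by split => //; apply: ger0_real; apply: mulcJ_ge0.
have [x0 [_ [_ [_ hnorm]]]] := @K0_norm_rat R K s sK es nt dK0.
have [r hr] := hnorm n K0n.
have sn : s n = s z * ((s z)^*)%C by rewrite /n (@esM _ _ _ es) // szc.
have Isz := @s_integral R K s sK es z Kz Iz.
have Ir : integralOver (intr : int -> R[i]) (ratr r).
  rewrite -hr sn; apply: integral_mul; apply: integral_mul => //; exact: conj_integral.
have rint := @rat_integral_int _ r Ir.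
have sz0 : s z != 0 := @es_neq0 _ _ sK _ es _ Kz z0.
have hpos : 0 < ratr r :> R[i].
  rewrite -hr sn /n !normsq; apply: mulr_gt0; apply: exprn_gt0; by rewrite normr_gt0.
have r1 : 1 <= ratr r :> R[i].
  rewrite -(rmorph1 (ratr : {rmorphism rat -> R[i]})) ler_rat.
  move: hpos; rewrite ltr0q; move/intrP: rint => [m ->].
  rewrite ltr0z ler1z => hm; by rewrite -gtz0_ge1.
have hsz : s z = s z1 - s z2 := @esB _ _ sK _ es _ _ Kz1 Kz2.
have e : z * (z^*)%C * (s z * ((s z)^*)%C) = ratr r by rewrite -hr sn.
have h1 : 1 <= cabs z ^+ 2 * cabs (s z) ^+ 2.
  rewrite -lecR rmorph1 rmorphM !rmorphXn /= !cabsE -!normsq e; exact: r1.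
set S := [set cabs (a - b) | a in B & b in B].
have hub : has_ubound S.
  exists (M + M) => y [a Ba [b Bb <-]].
  have := @cabsB _ a b; have := hM a Ba; have := hM b Bb; lra.
have hd : cabs (s z) <= diam B.
  rewrite /diam -/S; apply: (ub_le_sup hub).
  by rewrite hsz; exists (s z1) => //; exists (s z2).
have a0 := @cabs_ge0 _ z; have d0 := @cabs_ge0 _ (s z).
move: h1 hd a0 d0; rewrite -/z.
set a := cabs z; set d := cabs (s z); set D := diam B => h1 hd a0 d0.
have ad0 : 0 <= a * d by apply: mulr_ge0.
move: h1; rewrite !expr2 => h1.
have ad1 : 1 <= a * d by nra.
have Dpos : 0 < D by nra.
rewrite ler_pdivrMr ?mulr_gt0 //; nra.
Qed.
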